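(* For a solid weak BCC-algebra $(X,*,0)$ the following conditions are equivalent: (a) $X$ is branchwise commutative; (b) $x*y=x*(y*(y*x))$ for all $x,y$ belonging to the same branch; (c) $x=y*(y*x)$ for all $x,y\in X$ with $x\leqslant y$; (d) $x*(x*y)=y*(y*(x*(x*y)))$ for all $x,y$ belonging to the same branch.
   Context: A weak BCC-algebra is a set $X$ with a binary operation $*$ and a constant $0$ satisfying, for all $x,y,z\in X$: (i) $((x*y)*(z*y))*(x*z)=0$; (ii) $x*x=0$; (iii) $x*0=x$; (iv) $x*y=y*x=0$ implies $x=y$. The relation $x\leqslant y$ iff $x*y=0$ is a partial order on $X$. Let $I(X)$ be the set of minimal elements of $X$ with respect to $\leqslant$. For $a\in I(X)$ the branch initiated by $a$ is $B(a)=\{x\in X: a\leqslant x\}$; ''belonging to the same branch'' means lying in a common $B(a)$. A weak BCC-algebra is called (left) solid if $(x*y)*z=(x*z)*y$ holds for all $x,y$ belonging to the same branch and all $z\in X$. It is called branchwise commutative if $x*(x*y)=y*(y*x)$ holds for all $x,y$ belonging to the same branch. *)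

(* Defs.v *)
Set Implicit Arguments.

Section WeakBCC.
Variables (X : Type) (op : X -> X -> X) (z : X).

Definition weak_BCC : Prop :=
  (forall x y w, op (op (op x y) (op w y)) (op x w) = z) /\
  (forall x, op x x = z) /\
  (forall x, op x z = x) /\
  (forall x y, op x y = z -> op y x = z -> x = y).

Definition bcc_le (x y : X) : Prop := op x y = z.

Definition bcc_minimal (a : X) : Prop := forall x, bcc_le x a -> x = a.

Definition in_branch (a x : X) : Prop := bcc_minimal a /\ bcc_le a x.

Definition same_branch (x y : X) : Prop :=
  exists a, in_branch a x /\ in_branch a y.

Definition solid : Prop :=
  forall x y w, same_branch x y -> op (op x y) w = op (op x w) y.

Definition branchwise_commutative : Prop :=
  forall x y, same_branch x y -> op x (op x y) = op y (op y x).

End WeakBCC.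

(* Main.v *)
Require Import Defs.
Set Implicit Arguments.

Lemma w_le0 (X : Type) (op : X -> X -> X) (z : X) (HX : weak_BCC op z) :
  forall x, op x z = z -> x = z.
Proof. destruct HX as [H1 [H2 [H3 H4]]]. intros x H. rewrite H3 in H. exact H. Qed.

Lemma w_trans (X : Type) (op : X -> X -> X) (z : X) (HX : weak_BCC op z) :
  forall x y w, op x y = z -> op y w = z -> op x w = z.
Proof.
  destruct HX as [H1 [H2 [H3 H4]]]. intros x y w Hxy Hyw.
  pose proof (H1 x w y) as E. rewrite Hyw, Hxy, !H3 in E. exact E.
Qed.

Lemma w_antil (X : Type) (op : X -> X -> X) (z : X) (HX : weak_BCC op z) :
  forall x y w, op y w = z -> op (op x w) (op x y) = z.
Proof.
  destruct HX as [H1 [H2 [H3 H4]]]. intros x y w Hyw.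
  pose proof (H1 x w y) as E. rewrite Hyw, H3 in E. exact E.
Qed.

Lemma w_E1 (X : Type) (op : X -> X -> X) (z : X) (HX : weak_BCC op z) :
  forall x w, op (op z (op w x)) (op x w) = z.
Proof.
  destruct HX as [H1 [H2 [H3 H4]]]. intros x w.
  pose proof (H1 x x w) as E. rewrite H2 in E. exact E.
Qed.

Lemma w_zz (X : Type) (op : X -> X -> X) (z : X) (HX : weak_BCC op z) :
  forall x, op (op z (op z x)) x = z.
Proof.
  intros x. pose proof (w_E1 HX x z) as E. destruct HX as [H1 [H2 [H3 H4]]].
  rewrite H3 in E. exact E.
Qed.

Lemma w_L1 (X : Type) (op : X -> X -> X) (z : X) (HX : weak_BCC op z) :
  forall x y, op x y = z -> op (op z (op z y)) x = z.
Proof.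
  destruct HX as [H1 [H2 [H3 H4]]]. intros x y Hxy.
  pose proof (H1 x y z) as E. rewrite Hxy, H3 in E. exact E.
Qed.

Lemma w_P4 (X : Type) (op : X -> X -> X) (z : X) (HX : weak_BCC op z) :
  forall v, op z (op z (op z v)) = op z v.
Proof.
  intros v. pose proof HX as HX'. destruct HX' as [H1 [H2 [H3 H4]]]. apply H4.
  - exact (w_zz HX (op z v)).
  - apply (w_antil HX). exact (w_zz HX v).
Qed.

Lemma w_min (X : Type) (op : X -> X -> X) (z : X) (HX : weak_BCC op z) :
  forall x, bcc_minimal op z (op z (op z x)).
Proof.
  intros x u Hu. unfold bcc_le in Hu.
  pose proof HX as HX'. destruct HX' as [H1 [H2 [H3 H4]]]. apply H4; [exact Hu|].
  pose proof (w_L1 HX _ _ Hu) as E. rewrite (w_P4 HX (op z x)) in E. exact E.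
Qed.

Lemma w_sb_le (X : Type) (op : X -> X -> X) (z : X) (HX : weak_BCC op z) :
  forall x y, op x y = z -> same_branch op z x y.
Proof.
  intros x y H. exists (op z (op z x)). split; split.
  - apply w_min; auto.
  - exact (w_zz HX x).
  - apply w_min; auto.
  - exact (w_trans HX _ _ _ (w_zz HX x) H).
Qed.

Lemma w_sb_refl (X : Type) (op : X -> X -> X) (z : X) (HX : weak_BCC op z) :
  forall x, same_branch op z x x.
Proof. intros x. apply w_sb_le; auto. destruct HX as [H1 [H2 [H3 H4]]]. auto. Qed.

Lemma w_sb_sym (X : Type) (op : X -> X -> X) (z : X) :
  forall x y, same_branch op z x y -> same_branch op z y x.
Proof. intros x y [a [Ha Hb]]. exists a. auto. Qed.

Lemma w_G2 (X : Type) (op : X -> X -> X) (z : X) (HX : weak_BCC op z) :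
  forall x y, same_branch op z x y -> op z (op x y) = z.
Proof.
  intros x y [a [[_ Hax] [_ Hay]]]. unfold bcc_le in *.
  destruct HX as [H1 [H2 [H3 H4]]].
  pose proof (H1 a y x) as E. rewrite Hay, Hax, H3 in E. exact E.
Qed.

Lemma s_S1 (X : Type) (op : X -> X -> X) (z : X) (HX : weak_BCC op z)
  (Hsolid : solid op z) :
  forall x y, same_branch op z x y -> op (op x (op x y)) y = z.
Proof.
  intros x y H. rewrite <- (Hsolid x y (op x y) H).
  destruct HX as [H1 [H2 [H3 H4]]]. apply H2.
Qed.

Lemma s_S2 (X : Type) (op : X -> X -> X) (z : X) (HX : weak_BCC op z)
  (Hsolid : solid op z) :
  forall x y, same_branch op z x y -> op (op x (op x y)) x = z.
Proof.
  intros x y H. rewrite <- (Hsolid x x (op x y) (w_sb_refl HX x)).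
  pose proof HX as HX'. destruct HX' as [H1 [H2 [H3 H4]]]. rewrite H2.
  exact (w_G2 HX H).
Qed.

Lemma s_M (X : Type) (op : X -> X -> X) (z : X) (HX : weak_BCC op z)
  (Hsolid : solid op z) :
  forall x y, same_branch op z x y -> op x (op x (op x y)) = op x y.
Proof.
  intros x y H. pose proof HX as HX'. destruct HX' as [H1 [H2 [H3 H4]]].
  set (u := op x (op x y)).
  assert (Hux : op u x = z) by exact (s_S2 HX Hsolid H).
  assert (Huy : op u y = z) by exact (s_S1 HX Hsolid H).
  apply H4.
  - rewrite (Hsolid x u (op x y)).
    + fold u. apply H2.
    + apply w_sb_sym. apply w_sb_le; auto.
  - apply (w_antil HX). exact Huy.
Qed.

Theorem theorem3p6 (X : Type) (op : X -> X -> X) (z : X)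
  (HX : weak_BCC op z) (Hsolid : solid op z) :
  let A := branchwise_commutative op z in
  let B := forall x y, same_branch op z x y -> op x y = op x (op y (op y x)) in
  let C := forall x y, bcc_le op z x y -> x = op y (op y x) in
  let D := forall x y, same_branch op z x y ->
             op x (op x y) = op y (op y (op x (op x y))) in
  (A <-> B) /\ (A <-> C) /\ (A <-> D).
Proof.
  intros A B C D.
  pose proof HX as HX'. destruct HX' as [H1 [H2 [H3 H4]]].
  assert (AB : A -> B).
  { intros HA x y H. rewrite (HA y x (w_sb_sym H)). symmetry. exact (s_M HX Hsolid H). }
  assert (BC : B -> C).
  { intros HB x y Hxy. unfold bcc_le in Hxy.
    pose proof (HB x y (@w_sb_le _ _ _ HX x y Hxy)) as E. rewrite Hxy in E.
    apply H4.
    - symmetry. exact E.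
    - apply (s_S1 HX Hsolid). apply w_sb_sym. apply w_sb_le; auto. }
  assert (CA : C -> A).
  { intros HC.
    assert (K : forall x y, same_branch op z x y ->
               op (op x (op x y)) (op y (op y x)) = z).
    { intros x y H.
      pose proof (s_S1 HX Hsolid H) as Huy.
      pose proof (s_S2 HX Hsolid H) as Hux.
      rewrite (HC _ _ Huy).
      apply (w_antil HX). apply (w_antil HX). exact Hux. }
    intros x y H. apply H4.
    - exact (K x y H).
    - exact (K y x (w_sb_sym H)). }
  assert (CD : C -> D).
  { intros HC x y H. apply HC. exact (s_S1 HX Hsolid H). }
  assert (DC : D -> C).
  { intros HD x y Hxy. unfold bcc_le in Hxy.
    pose proof (HD x y (@w_sb_le _ _ _ HX x y Hxy)) as E. rewrite Hxy, H3 in E. exact E. }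
  split; [split|split; split]; auto.
Qed.
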